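(* Let $\theta\in(\pi/3,\pi/2)$ and define \[ \zeta=\zeta(\theta)=-\frac{1}{2\cos\theta},\qquad z=z(\theta)=\frac{2\cos\theta}{\sqrt{(1-4\cos^2\theta)^3}}. \] Then the three zeros in $t$ of $1+t^2+z(\theta)t^3$ are \[ t_0=-\frac{e^{-i\theta}}{z(2\cos\theta+\zeta)},\qquad t_1=t_0e^{2i\theta},\qquad t_2=\zeta e^{i\theta}t_0. \] *)

(* Defs.v *)
From Stdlib Require Import Reals.
From Coquelicot Require Import Coquelicot.
Open Scope R_scope.

Definition cexpi (x : R) : C := (cos x, sin x).

Definition zeta (theta : R) : R := - 1 / (2 * cos theta).

Definition zth (theta : R) : R :=
  2 * cos theta / sqrt ((1 - 4 * (cos theta) ^ 2) ^ 3).

Definition cubic (zz : R) (t : C) : C :=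
  (1 + t * t + RtoC zz * (t * t * t))%C.

Definition t0 (theta : R) : C :=
  (- cexpi (- theta) / RtoC (zth theta * (2 * cos theta + zeta theta)))%C.
Definition t1 (theta : R) : C := (t0 theta * cexpi (2 * theta))%C.
Definition t2 (theta : R) : C :=
  (RtoC (zeta theta) * cexpi theta * t0 theta)%C.

(* Main.v *)
Require Import Defs.
From Stdlib Require Import Reals Lra.
From Coquelicot Require Import Coquelicot.
Open Scope R_scope.

Lemma real_key (c S : R) : 0 < c -> 0 < S -> S*S = (1 - 4*c^2)^3 ->
  (2*c/S) * (-1/(2*c)) = ((2*c/S)*(2*c + -1/(2*c)))^3.
Proof. intros hc hS hSS.
  replace (((2*c/S)*(2*c + -1/(2*c)))^3) with (- (1 - 4*c^2)^3 / (S*S*S)) by (field; lra).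
  rewrite <- hSS. field; lra.
Qed.

Theorem lemma3p3 (theta : R) (h1 : PI / 3 < theta) (h2 : theta < PI / 2) :
  forall t : C,
    cubic (zth theta) t =
    (RtoC (zth theta) * ((t - t0 theta) * (t - t1 theta) * (t - t2 theta)))%C.
Proof.
  intro t.
  assert (hpi := PI_RGT_0).
  assert (hc : 0 < cos theta) by (apply cos_gt_0; lra).
  assert (hc2 : cos theta < 1/2).
  { rewrite <- cos_PI3. apply cos_decreasing_1; lra. }
  set (c := cos theta) in *.
  set (s := sin theta).
  assert (hq : 0 < (1 - 4*c^2)^3) by (apply pow_lt; nra).
  set (S := sqrt ((1 - 4*c^2)^3)).
  assert (hS : 0 < S) by (apply sqrt_lt_R0; exact hq).
  assert (hSS : S*S = (1 - 4*c^2)^3) by (apply sqrt_sqrt; lra).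
  assert (hz : zth theta = 2*c/S) by reflexivity.
  assert (hzeta : zeta theta = -1/(2*c)) by reflexivity.
  assert (hkey := real_key c S hc hS hSS).
  set (Z := zth theta) in *. set (ze := zeta theta) in *.
  set (A := 2*c + ze).
  assert (hA : A <> 0).
  { unfold A; rewrite hzeta; intro HH.
    assert (HH3 : 2*c*(2*c + -1/(2*c)) = 4*c^2-1) by (field; lra).
    rewrite HH in HH3. nra. }
  assert (hZ : Z <> 0) by (rewrite hz; apply Rgt_not_eq; apply Rdiv_lt_0_compat; lra).
  assert (hkey2 : Z * ze = (Z*A)*(Z*A)*(Z*A)) by (rewrite hz; unfold A; rewrite hzeta; rewrite hkey; ring).
  assert (hsum : 1 + ze*(2*c) = 0) by (rewrite hzeta; field; lra).
  set (E := cexpi theta). set (E' := cexpi (- theta)).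
  set (w := RtoC (Z*A)).
  assert (hw : w <> 0%C).
  { unfold w. intro HH. apply (f_equal fst) in HH. simpl in HH.
    apply (Rmult_integral_contrapositive_currified Z A hZ hA). exact HH. }
  assert (hEE : (E' * E = 1)%C).
  { unfold E, E', cexpi. rewrite cos_neg, sin_neg. apply injective_projections; simpl;
    fold c s; [assert (H := sin2_cos2 theta); fold c s in H; unfold Rsqr in H; lra | ring]. }
  assert (hEpE : (E' + E = RtoC (2*c))%C).
  { unfold E, E', cexpi, RtoC. rewrite cos_neg, sin_neg. apply injective_projections; simpl;
    fold c; ring. }
  assert (hE2 : cexpi (2*theta) = (E*E)%C).
  { unfold E, cexpi. rewrite cos_2a, sin_2a. apply injective_projections; simpl; ring. }
  assert (ht0 : t0 theta = (- E' / w)%C) by reflexivity.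
  assert (ht1 : t1 theta = (- E / w)%C).
  { unfold t1. rewrite ht0, hE2. replace (- E' / w * (E * E))%C with (- (E'*E) * E / w)%C
      by (field; exact hw). rewrite hEE. field; exact hw. }
  assert (ht2 : t2 theta = (- RtoC ze / w)%C).
  { unfold t2. fold ze E. rewrite ht0.
    replace (RtoC ze * E * (- E' / w))%C with (- RtoC ze * (E' * E) / w)%C
      by (field; exact hw). rewrite hEE. field; exact hw. }
  rewrite ht1, ht2, ht0. unfold cubic. fold Z.
  assert (K1 : (RtoC Z * (E' + E + RtoC ze) = w)%C).
  { rewrite hEpE. unfold w, A. rewrite <- RtoC_plus, <- RtoC_mult. reflexivity. }
  assert (K2 : (E' * E + RtoC ze * (E' + E) = 0)%C).
  { rewrite hEE, hEpE, <- RtoC_mult, <- RtoC_plus. rewrite hsum. reflexivity. }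
  assert (K3 : (RtoC Z * RtoC ze = w * w * w)%C).
  { unfold w. rewrite <- !RtoC_mult. rewrite hkey2. reflexivity. }
  transitivity (RtoC Z * (t*t*t) + t*t*(RtoC Z * (E' + E + RtoC ze))/w
     + t*(RtoC Z * (E' * E + RtoC ze * (E' + E)))/(w*w) + RtoC Z * RtoC ze * (E' * E) / (w*w*w))%C.
  - rewrite K1, K2, hEE, Cmult_1_r, K3. field. exact hw.
  - field. exact hw.
Qed.
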